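(* Let $0<c<1$ and let $(v^*,u^* )$ be the unique saddle point of $\min_v\max_u E(v,u)$. Define, for $v\in\mathbb{R}^{|S|}$, $u\in\mathbb{R}^{|S|\times|A|}_{>0}$, $$L_c(v,u)=\frac{\alpha}{2}\sum_s|v_s-v^*_s|^2+\tau\Big(\sum_{s,a}\Big(u^*_{sa}\log\frac{u^*_{sa}}{u_{sa}}+u_{sa}-u^*_{sa}\Big)+\frac{c}{1-c}\sum_s\Big(\tilde u^*_s\log\frac{\tilde u^*_s}{\tilde u_s}+\tilde u_s-\tilde u^*_s\Big)\Big).$$ Then $L_c$ is convex, its unique minimum is attained at $(v^*,u^* )$ with $L_c(v^*,u^* )=0$, and the sublevel sets of $L_c$ are bounded.
   Context: Finite MDP: state space $S$, action space $A$, transition probabilities $P_{ass'}$ (with $\sum_{s'}P_{ass'}=1$), rewards $r_{sa}\ge0$, discount $\gamma\in(0,1)$, regularization $\tau>0$, and $\alpha>0$. $K_{ass'}=\delta_{ss'}-\gamma P_{ass'}$, $\tilde u_s=\sum_a u_{sa}$ (and $\tilde u^*_s=\sum_a u^*_{sa}$), and $E(v,u)=\frac{\alpha}{2}\sum_s v_s^2+\sum_{s,a}u_{sa}(r_{sa}-\sum_{s'}K_{ass'}v_{s'})-\tau\sum_{s,a}u_{sa}\log(u_{sa}/\tilde u_s)$. This min-max problem has a unique saddle point $(v^*,u^* )$ with $u^*_{sa}>0$. *)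

(* Defs.v *)
From mathcomp Require Import all_boot all_order all_algebra.
From mathcomp Require Import reals exp.
Set Implicit Arguments. Unset Strict Implicit. Unset Printing Implicit Defensive.
Import Order.TTheory GRing.Theory Num.Theory.
Local Open Scope ring_scope.

Section MDP.
Variables (R : realType) (S A : finType).

Definition stochastic (P : A -> S -> S -> R) : Prop :=
  (forall a s s', 0 <= P a s s') /\ (forall a s, \sum_(s' : S) P a s s' = 1).

Definition Kmat (gamma : R) (P : A -> S -> S -> R) (a : A) (s s' : S) : R :=
  (s == s')%:R - gamma * P a s s'.

Definition utilde (u : S -> A -> R) (s : S) : R := \sum_(a : A) u s a.

Definition posu (u : S -> A -> R) : Prop := forall s a, 0 < u s a.

Definition Efun (gamma tau alpha : R) (P : A -> S -> S -> R) (r : S -> A -> R)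
  (v : S -> R) (u : S -> A -> R) : R :=
  alpha / 2 * \sum_(s : S) v s ^+ 2
  + \sum_(s : S) \sum_(a : A)
      u s a * (r s a - \sum_(s' : S) Kmat gamma P a s s' * v s')
  - tau * \sum_(s : S) \sum_(a : A) u s a * ln (u s a / utilde u s).

Definition saddle_point (gamma tau alpha : R) (P : A -> S -> S -> R)
  (r : S -> A -> R) (vs : S -> R) (us : S -> A -> R) : Prop :=
  posu us /\
  (forall u, posu u -> Efun gamma tau alpha P r vs u <= Efun gamma tau alpha P r vs us) /\
  (forall v, Efun gamma tau alpha P r vs us <= Efun gamma tau alpha P r v us).

Definition Lc (tau alpha c : R) (vs : S -> R) (us : S -> A -> R)
  (v : S -> R) (u : S -> A -> R) : R :=
  alpha / 2 * \sum_(s : S) `|v s - vs s| ^+ 2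
  + tau * (\sum_(s : S) \sum_(a : A)
             (us s a * ln (us s a / u s a) + u s a - us s a)
           + c / (1 - c) * \sum_(s : S)
             (utilde us s * ln (utilde us s / utilde u s)
              + utilde u s - utilde us s)).

End MDP.

(* Main.v *)
Require Import Defs.
From mathcomp Require Import all_boot all_order all_algebra.
From mathcomp Require Import reals exp.
From mathcomp Require Import lra ring.
From Stdlib Require Import FunctionalExtensionality.
Import Order.TTheory GRing.Theory Num.Theory.
Local Open Scope ring_scope.
Set Implicit Arguments. Unset Strict Implicit.


Definition gf {R : realType} (a y : R) := a * ln (a / y) + y - a.

Lemma ln_le1 {R : realType} (x : R) : 0 < x -> ln x <= x - 1.
Proof.
move=> x0; have := @le_ln1Dx R (x - 1).
have -> : 1 + (x - 1) = x by rewrite addrC subrK.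
apply; lra.
Qed.

Lemma ln_lt1 {R : realType} (x : R) : 0 < x -> x != 1 -> ln x < x - 1.
Proof.
move=> x0 x1; set q := Num.sqrt x.
have q0 : 0 < q by rewrite sqrtr_gt0.
have qq : q ^+ 2 = x by rewrite sqr_sqrtr ?ltW.
have q1 : q != 1 by apply: contra x1 => /eqP q1; rewrite -qq q1 expr1n.
have e : ln x = ln q *+ 2 by rewrite -qq lnXn.
have h := ln_le1 q0.
have h2 : 0 < (q - 1) ^+ 2 by rewrite lt_def sqrf_eq0 subr_eq0 q1 sqr_ge0.
rewrite e -qq; move: h2 h; rewrite mulr2n; lra.
Qed.

Lemma gf_ge0 {R : realType} (a y : R) : 0 < a -> 0 < y -> 0 <= gf a y.
Proof.
move=> a0 y0; rewrite /gf.
have -> : ln (a / y) = - ln (y / a)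
  by rewrite -lnV ?posrE ?divr_gt0 // invf_div.
have h := ler_wpM2l (ltW a0) (ln_le1 (divr_gt0 y0 a0)).
have e : a * (y / a) = y by rewrite mulrC divfK ?gt_eqF.
move: h; rewrite mulrBr mulr1 e; lra.
Qed.

Lemma gf_gt0 {R : realType} (a y : R) : 0 < a -> 0 < y -> y != a -> 0 < gf a y.
Proof.
move=> a0 y0 ya; rewrite /gf.
have -> : ln (a / y) = - ln (y / a)
  by rewrite -lnV ?posrE ?divr_gt0 // invf_div.
have ya1 : y / a != 1.
  by apply: contra ya => /eqP h; rewrite -[y](divfK (lt0r_neq0 a0)) h mul1r.
have h : a * ln (y / a) < a * (y / a - 1)
  by rewrite ltr_pM2l // ln_lt1 // divr_gt0.
have e : a * (y / a) = y by rewrite mulrC divfK ?gt_eqF.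
move: h; rewrite mulrBr mulr1 e; lra.
Qed.

Lemma gf_aa {R : realType} (a : R) : gf a a = 0.
Proof.
rewrite /gf; have [->|a0] := eqVneq a 0; first by rewrite mul0r addr0 subrr.
by rewrite divff // ln1 mulr0 add0r subrr.
Qed.

Lemma gf00 {R : realType} : @gf R 0 0 = 0.
Proof. exact: gf_aa. Qed.

Lemma gf_bound {R : realType} (a y : R) : 0 < a -> 0 < y -> y <= 2 * gf a y + 2 * a.
Proof.
move=> a0 y0; rewrite /gf.
have -> : ln (a / y) = - ln (y / a)
  by rewrite -lnV ?posrE ?divr_gt0 // invf_div.
have a20 : 0 < a * 2 by rewrite mulr_gt0.
have e1 : y / a = y / (a * 2) * 2.
  by field; rewrite ?pnatr_eq0 ?lt0r_neq0.
have l2 : ln (2 : R) <= 1 by have := @ln_le1 R 2 (ltr0Sn _ _); lra.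
have e2 : ln (y / a) = ln (y / (a * 2)) + ln 2.
  by rewrite e1 lnM ?posrE ?divr_gt0.
have h := ler_wpM2l (ltW a0) (ln_le1 (divr_gt0 y0 a20)).
rewrite mulrBr mulr1 in h.
set X := a * (y / (a * 2)) in h.
have eX : X * 2 = y.
  by rewrite /X; field; rewrite ?pnatr_eq0 ?lt0r_neq0.
have h3 := ler_wpM2l (ltW a0) l2.
move: h h3; rewrite e2 mulrDr; lra.
Qed.


Lemma conv_pos {R : realType} (y1 y2 t : R) : 0 < y1 -> 0 < y2 -> 0 <= t <= 1 ->
  0 < t * y1 + (1 - t) * y2.
Proof.
move=> y10 y20 /andP[t0 t1].
move: t0; rewrite le_eqVlt => /predU1P[<-|t0].
  by rewrite mul0r add0r subr0 mul1r.
have h1 := mulr_gt0 t0 y10.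
have t1' : 0 <= 1 - t by rewrite subr_ge0.
have h2 := mulr_ge0 t1' (ltW y20).
lra.
Qed.

Lemma ln_concave {R : realType} (y1 y2 t : R) : 0 < y1 -> 0 < y2 -> 0 <= t <= 1 ->
  t * ln y1 + (1 - t) * ln y2 <= ln (t * y1 + (1 - t) * y2).
Proof.
move=> y10 y20 tt; have m0 := conv_pos y10 y20 tt.
move: tt => /andP[t0 t1].
set m := t * y1 + (1 - t) * y2 in m0 *.
have t1' : 0 <= 1 - t by rewrite subr_ge0.
have h1 := ler_wpM2l t0 (ln_le1 (divr_gt0 y10 m0)).
have h2 := ler_wpM2l t1' (ln_le1 (divr_gt0 y20 m0)).
rewrite !ln_div ?posrE // in h1 h2.
have e : t * (y1 / m) + (1 - t) * (y2 / m) = 1.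
  by rewrite !mulrA -mulrDl divff // gt_eqF.
lra.
Qed.

Lemma gf_convex {R : realType} (a : R) (y1 y2 t : R) : 0 < a -> 0 < y1 -> 0 < y2 -> 0 <= t <= 1 ->
  gf a (t * y1 + (1 - t) * y2) <= t * gf a y1 + (1 - t) * gf a y2.
Proof.
move=> a0 y10 y20 tt; have m0 := conv_pos y10 y20 tt.
have h := ler_wpM2l (ltW a0) (ln_concave y10 y20 tt).
rewrite /gf !ln_div ?posrE //.
lra.
Qed.

Lemma sq_convex {R : realType} (x1 x2 c t : R) : 0 <= t <= 1 ->
  `|t * x1 + (1 - t) * x2 - c| ^+ 2 <= t * `|x1 - c| ^+ 2 + (1 - t) * `|x2 - c| ^+ 2.
Proof.
move=> /andP[t0 t1]; rewrite !real_normK ?num_real //.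
have t1' : 0 <= 1 - t by rewrite subr_ge0.
have := mulr_ge0 (mulr_ge0 t0 t1') (sqr_ge0 (x1 - x2)).
lra.
Qed.

Lemma le_sum1 {R : realType} (I : finType) (F : I -> R) i :
  (forall j, 0 <= F j) -> F i <= \sum_j F j.
Proof. by move=> h; rewrite (bigD1 i) //= lerDl sumr_ge0. Qed.

Lemma sum_gt0 {R : realType} (I : finType) (F : I -> R) i :
  (forall j, 0 <= F j) -> 0 < F i -> 0 < \sum_j F j.
Proof. by move=> h hi; apply: (lt_le_trans hi); apply: le_sum1. Qed.


Unset Implicit Arguments.

Theorem lemma3p1 (R : realType) (S A : finType)
  (P : A -> S -> S -> R) (r : S -> A -> R) (gamma tau alpha c : R)
  (vs : S -> R) (us : S -> A -> R) :
  stochastic P ->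
  (forall s a, 0 <= r s a) ->
  0 < gamma < 1 -> 0 < tau -> 0 < alpha ->
  0 < c < 1 ->
  saddle_point gamma tau alpha P r vs us ->
  (* convexity of L_c on R^S x (R_{>0})^{S x A} *)
  (forall (v1 v2 : S -> R) (u1 u2 : S -> A -> R) (t : R),
      posu u1 -> posu u2 -> 0 <= t <= 1 ->
      Lc tau alpha c vs us (fun s => t * v1 s + (1 - t) * v2 s)
                           (fun s a => t * u1 s a + (1 - t) * u2 s a)
      <= t * Lc tau alpha c vs us v1 u1 + (1 - t) * Lc tau alpha c vs us v2 u2)
  /\
  (* unique minimum at (vs, us), with value 0 *)
  Lc tau alpha c vs us vs us = 0 /\
  (forall (v : S -> R) (u : S -> A -> R), posu u ->
      (v <> vs \/ u <> us) -> Lc tau alpha c vs us vs us < Lc tau alpha c vs us v u)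
  /\
  (* bounded sublevel sets *)
  (forall M : R, exists B : R, forall (v : S -> R) (u : S -> A -> R), posu u ->
      Lc tau alpha c vs us v u <= M ->
      (forall s, `|v s| <= B) /\ (forall s a, `|u s a| <= B)).
Proof.
move=> _ _ _ tau0 alpha0 /andP[c0 c1] [pus _].
set k := c / (1 - c).
have k0 : 0 <= k by rewrite /k divr_ge0 ?subr_ge0 ?ltW.
set V := fun v : S -> R => \sum_s `|v s - vs s| ^+ 2.
set U := fun u : S -> A -> R => \sum_s \sum_a gf (us s a) (u s a).
set W := fun u : S -> A -> R => \sum_s gf (utilde us s) (utilde u s).
have LcE : forall v u, Lc tau alpha c vs us v u = alpha / 2 * V v + tau * (U u + k * W u).
  by [].
have V0 : forall v, 0 <= V v by move=> v; apply: sumr_ge0 => s _; apply: sqr_ge0.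
have U0 : forall u, posu u -> 0 <= U u.
  move=> u pu; apply: sumr_ge0 => s _; apply: sumr_ge0 => a _; exact: gf_ge0.
have AA : (forall u : S -> A -> R, posu u -> forall s, 0 < utilde u s) \/
                   (forall (u : S -> A -> R) s, utilde u s = 0).
  case: (pickP (fun _ : A => true)) => [a0 _|hA].
    left=> u pu s; rewrite /utilde; apply: (lt_le_trans (pu s a0)).
    by apply: le_sum1 => j; exact: ltW.
  by right=> u s; rewrite /utilde big1 // => a _; move: (hA a).
have Wfacts : (forall u, posu u -> 0 <= W u) /\
  (forall (u1 u2 : S -> A -> R) (t : R), posu u1 -> posu u2 -> 0 <= t <= 1 ->
     W (fun s a => t * u1 s a + (1 - t) * u2 s a) <= t * W u1 + (1 - t) * W u2).
  case: AA => [Apos|Aemp].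
    split.
      by move=> u pu; apply: sumr_ge0 => s _; apply: gf_ge0; apply: Apos.
    move=> u1 u2 t pu1 pu2 tt; rewrite /W !mulr_sumr -big_split /=.
    apply: ler_sum => s _.
    have -> : utilde (fun s a => t * u1 s a + (1 - t) * u2 s a) s
              = t * utilde u1 s + (1 - t) * utilde u2 s.
      by rewrite /utilde big_split /= -!mulr_sumr.
    by apply: gf_convex => //; apply: Apos.
  have W0 : forall u, W u = 0.
    by move=> u; rewrite /W big1 // => s _; rewrite !Aemp gf00.
  by split=> *; rewrite !W0 ?mulr0 ?addr0.
case: Wfacts => W0 Wconv.
have Wus : W us = 0 by rewrite /W big1 // => s _; rewrite gf_aa.
have Uus : U us = 0.
  by rewrite /U big1 // => s _; rewrite big1 // => a _; rewrite gf_aa.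
have Vvs : V vs = 0.
  by rewrite /V big1 // => s _; rewrite subrr normr0 expr0n.
have L0 : Lc tau alpha c vs us vs us = 0 by rewrite LcE Vvs Uus Wus; lra.
split.
  move=> v1 v2 u1 u2 t pu1 pu2 tt; rewrite !LcE.
  have hV : V (fun s => t * v1 s + (1 - t) * v2 s) <= t * V v1 + (1 - t) * V v2.
    rewrite /V !mulr_sumr -big_split /=; apply: ler_sum => s _.
    exact: sq_convex.
  have hU : U (fun s a => t * u1 s a + (1 - t) * u2 s a) <= t * U u1 + (1 - t) * U u2.
    rewrite /U !mulr_sumr -big_split /=; apply: ler_sum => s _.
    rewrite !mulr_sumr -big_split /=; apply: ler_sum => a _.
    exact: gf_convex.
  have hW := Wconv u1 u2 t pu1 pu2 tt.
  have a2 : 0 <= alpha / 2 by rewrite divr_ge0 ?ltW.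
  have h1 := ler_wpM2l a2 hV.
  have h2 := ler_wpM2l (ltW tau0) hU.
  have h3 := ler_wpM2l (mulr_ge0 (ltW tau0) k0) hW.
  lra.
split; first exact: L0.
split.
  move=> v u pu hvu; rewrite L0 LcE.
  have a2 : 0 < alpha / 2 by rewrite divr_gt0.
  have hUW := mulr_ge0 (ltW tau0) (addr_ge0 (U0 u pu) (mulr_ge0 k0 (W0 u pu))).
  case: hvu => [hv|hu].
    have : ~~ [forall s, v s == vs s].
      apply/negP => /forallP h; apply: hv; apply: functional_extensionality => s.
      exact/eqP.
    rewrite negb_forall => /existsP [s hs].
    have Vp : 0 < V v.
      apply: (@sum_gt0 R S (fun s => `|v s - vs s| ^+ 2) s).
        by move=> j; apply: sqr_ge0.
      by rewrite exprn_gt0 // normr_gt0 subr_eq0.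
    have := mulr_gt0 a2 Vp; lra.
  have : ~~ [forall s, forall a, u s a == us s a].
    apply/negP => /forallP h; apply: hu; apply: functional_extensionality => s.
    apply: functional_extensionality => a; move/forallP: (h s) => h'; exact/eqP.
  rewrite negb_forall => /existsP [s]; rewrite negb_forall => /existsP [a hs].
  have Up : 0 < U u.
    apply: (@sum_gt0 R S (fun s => \sum_a gf (us s a) (u s a)) s).
      by move=> j; apply: sumr_ge0 => b _; apply: gf_ge0.
    apply: (@sum_gt0 R A (fun a => gf (us s a) (u s a)) a).
      by move=> b; apply: gf_ge0.
    by apply: gf_gt0.
  have := mulr_gt0 tau0 Up.
  have := mulr_ge0 (ltW tau0) (mulr_ge0 k0 (W0 u pu)).
  have := mulr_ge0 (ltW a2) (V0 v); lra.
move=> M.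
exists (\sum_s `|vs s| + 1 + 2 * `|M| / alpha
        + (2 * `|M| / tau + 2 * \sum_s \sum_a us s a)).
move=> v u pu hL; rewrite LcE in hL.
have hM : M <= `|M| := ler_norm M.
have a2 : 0 <= alpha / 2 by rewrite divr_ge0 ?ltW.
have hVa := mulr_ge0 a2 (V0 v).
have hUt := mulr_ge0 (ltW tau0) (U0 u pu).
have hWt := mulr_ge0 (mulr_ge0 (ltW tau0) k0) (W0 u pu).
have Ma : 0 <= 2 * `|M| / alpha by rewrite divr_ge0 ?mulr_ge0 ?ler0n ?normr_ge0 ?ltW.
have Mt : 0 <= 2 * `|M| / tau by rewrite divr_ge0 ?mulr_ge0 ?ler0n ?normr_ge0 ?ltW.
have Sus : 0 <= \sum_s \sum_a us s a.
  by apply: sumr_ge0 => s _; apply: sumr_ge0 => a _; apply: ltW.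
have Svs : 0 <= \sum_s `|vs s| by apply: sumr_ge0 => s _.
split.
  move=> s.
  have hd : `|v s - vs s| ^+ 2 <= V v.
    by apply: (@le_sum1 R S (fun s => `|v s - vs s| ^+ 2)) => j; apply: sqr_ge0.
  have hd2 : `|v s - vs s| ^+ 2 <= 2 * `|M| / alpha.
    rewrite ler_pdivlMr //.
    have := ler_wpM2l (ltW alpha0) hd; lra.
  have hd3 := sqr_ge0 (`|v s - vs s| - 1).
  have hn := ler_normD (vs s) (v s - vs s).
  have e : vs s + (v s - vs s) = v s by rewrite addrC subrK.
  rewrite e in hn.
  have hvs : `|vs s| <= \sum_s `|vs s|.
    by apply: (@le_sum1 R S (fun s => `|vs s|)).
  have := normr_ge0 (v s - vs s).
  lra.
move=> s a; rewrite gtr0_norm //.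
have hg : gf (us s a) (u s a) <= U u.
  apply: (le_trans _ (@le_sum1 R S (fun s => \sum_a gf (us s a) (u s a)) s _)).
    by apply: (@le_sum1 R A (fun a => gf (us s a) (u s a))) => b; apply: gf_ge0.
  by move=> j; apply: sumr_ge0 => b _; apply: gf_ge0.
have hg2 : gf (us s a) (u s a) <= `|M| / tau.
  rewrite ler_pdivlMr //.
  have := ler_wpM2l (ltW tau0) hg; lra.
have hb := gf_bound (pus s a) (pu s a).
have hus : us s a <= \sum_s \sum_a us s a.
  apply: (le_trans _ (@le_sum1 R S (fun s => \sum_a us s a) s _)).
    by apply: (@le_sum1 R A (fun a => us s a)) => b; apply: ltW.
  by move=> j; apply: sumr_ge0 => b _; apply: ltW.
have e : 2 * `|M| / tau = 2 * (`|M| / tau) by rewrite mulrA.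
lra.
Qed.

Unset Implicit Arguments.
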